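(* Let $\phi:\mathbb{R}^m\to\mathbb{R}^n$ be a quadratic harmonic morphism. Then its complete lift $\Phi:\mathbb{R}^m\times\mathbb{R}^m\to\mathbb{R}^n$, $\Phi(x,y)=J\phi(x)\,y$ (the Jacobian matrix of $\phi$ at $x$ applied to the column vector $y$), is again a quadratic harmonic morphism.
   Context: A map $\psi:\mathbb{R}^N\to\mathbb{R}^n$ is quadratic if all its components are homogeneous polynomials of degree $2$. A smooth map $\psi:\mathbb{R}^N\to\mathbb{R}^n$ is a harmonic morphism if for every harmonic function $f$ defined on an open set $V\subset\mathbb{R}^n$ with $\psi^{-1}(V)\neq\emptyset$, the function $f\circ\psi$ is harmonic on $\psi^{-1}(V)$; equivalently, $\psi$ is harmonic (each component satisfies $\sum_i\partial^2\psi^k/\partial x_i^2=0$) and horizontally weakly conformal (there is a function $\lambda$ with $\sum_i\frac{\partial\psi^k}{\partial x_i}\frac{\partial\psi^l}{\partial x_i}=\lambda^2\delta_{kl}$ for all $k,l$). *)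

(* Defs.v *)
From HB Require Import structures.
From mathcomp Require Import all_boot all_order all_algebra.
From mathcomp Require Import reals.
From mathcomp Require Import mpoly.
Set Implicit Arguments. Unset Strict Implicit. Unset Printing Implicit Defensive.
Import Order.TTheory GRing.Theory Num.Theory.
Local Open Scope ring_scope.

(* A polynomial map R^m -> R^n is encoded by its n component polynomials
   p k : {mpoly R[m]}; the map is x |-> (fun k => (p k).@[x]).
   For polynomials, formal partial derivatives (mderiv) coincide with the
   analytic ones. *)

Section Defs.
Variable R : realType.

Definition pmap_eval m n (p : 'I_n -> {mpoly R[m]}) (x : 'I_m -> R) : 'I_n -> R :=
  fun k => (p k).@[x].

Definition quadratic_map m n (p : 'I_n -> {mpoly R[m]}) : Prop :=
  forall k, p k \is 2.-homog.

Definition harmonic_map m n (p : 'I_n -> {mpoly R[m]}) : Prop :=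
  forall (k : 'I_n) (x : 'I_m -> R),
    (\sum_(i < m) mderiv i (mderiv i (p k))).@[x] = 0.

Definition hwc_map m n (p : 'I_n -> {mpoly R[m]}) : Prop :=
  exists lam : ('I_m -> R) -> R,
    forall (x : 'I_m -> R) (k l : 'I_n),
      \sum_(i < m) (mderiv i (p k)).@[x] * (mderiv i (p l)).@[x]
        = lam x ^+ 2 * (k == l)%:R.

Definition harmonic_morphism m n (p : 'I_n -> {mpoly R[m]}) : Prop :=
  harmonic_map p /\ hwc_map p.

(* R^m x R^m is identified with R^(m+m): coordinates x_i = X_(lshift m i),
   y_j = X_(rshift m j). *)
Definition xvars m : m.-tuple {mpoly R[m + m]} :=
  [tuple 'X_(lshift m i) | i < m].

Definition complete_lift m n (p : 'I_n -> {mpoly R[m]}) : 'I_n -> {mpoly R[m + m]} :=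
  fun k => \sum_(j < m) ((mderiv j (p k)) \mPo (xvars m)) * 'X_(rshift m j).

End Defs.

(* Main.v *)
Require Import Defs.
From HB Require Import structures.
From mathcomp Require Import all_boot all_order all_algebra.
From mathcomp Require Import reals.
From mathcomp Require Import mpoly.
Set Implicit Arguments. Unset Strict Implicit. Unset Printing Implicit Defensive.
Import Order.TTheory GRing.Theory Num.Theory.
Local Open Scope ring_scope.

Section S.
Variable R : realType.

Lemma deriv_homog2 N (p : {mpoly R[N]}) j :
  p \is 2.-homog -> p^`M(j) \is 1.-homog.
Proof.
move=> hp; apply/dhomogP => mm; rewrite mcoeff_msupp mcoeff_mderiv => nz.
have nz' : p@_(mm + U_(j)) != 0.
  by apply: contra nz => /eqP ->; rewrite mul0rn.
have := dhomog_mf hp; move/(_ (mm + U_(j))%MM); rewrite mcoeff_msupp nz'.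
move=> /(_ isT); change (mdeg (mm + U_(j))%MM = 2%N -> mdeg mm = 1%N).
by rewrite mdegD mdeg1 addn1 => -[].
Qed.

Lemma homog1E N (q : {mpoly R[N]}) :
  q \is 1.-homog -> q = \sum_(i < N) q@_U_(i) *: 'X_i.
Proof.
move=> hq; apply/mpolyP => mm; rewrite raddf_sum /=.
under eq_bigr => i _ do rewrite mcoeffZ mcoeffX.
have [/mdeg1P [i /eqP ->]|nd] := boolP (mdeg mm == 1%N).
  rewrite (bigD1 i) //= eqxx mulr1 big1 ?addr0 // => j ji.
  case: eqP => [/mnmP/(_ i)|]; last by rewrite mulr0.
  by rewrite !mnm1E eqxx (negbTE ji).
rewrite (dhomog_nemf_coeff hq nd) big1 // => i _.
case: eqP => [E|]; last by rewrite mulr0.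
by move: nd; rewrite -E mdeg1.
Qed.

Lemma mderivXU N (u v : 'I_N) : ('X_u : {mpoly R[N]})^`M(v) = (u == v)%:R%:MP.
Proof.
rewrite mderivX mnm1E; case: eqP => [->|_]; last by rewrite scale0r.
have -> : (U_(v) - U_(v) = 0)%MM by apply/mnmP => k; rewrite mnmBE mnm0E subnn.
by rewrite mpolyX0 scale1r.
Qed.

Variable m : nat.
Local Notation l := (lshift m).
Local Notation r := (rshift m).

Definition LF (c : 'I_m -> 'I_m -> R) : {mpoly R[m + m]} :=
  \sum_(j < m) (\sum_(i < m) c j i *: 'X_(l i)) * 'X_(r j).

Lemma lr_neq i j : (l i == r j) = false.
Proof. by apply/negbTE/eqP => /(congr1 val) /= E; move: (ltn_ord i); rewrite E -ltn_subRL subnn. Qed.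

Lemma mderiv_lin (c : 'I_m -> R) (f : 'I_m -> 'I_(m + m)) v :
  (\sum_(i < m) c i *: 'X_(f i))^`M(v) = (\sum_(i < m) c i * (f i == v)%:R)%:MP.
Proof.
rewrite raddf_sum /= raddf_sum /=; apply eq_bigr => i _.
by rewrite mderivZ mderivXU -mul_mpolyC -mpolyCM.
Qed.

Lemma LF_dl c i0 : (LF c)^`M(l i0) = \sum_(j < m) (c j i0)%:MP * 'X_(r j).
Proof.
rewrite /LF raddf_sum /=; apply eq_bigr => j _.
rewrite mderivM mderivXU eq_sym lr_neq mulr0 addr0 mderiv_lin; congr (_%:MP * _).
rewrite (bigD1 i0) //= eqxx mulr1 big1 ?addr0 // => i ii.
by rewrite (inj_eq (@lshift_inj _ _)) (negbTE ii) mulr0.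
Qed.

Lemma LF_dr c j0 : (LF c)^`M(r j0) = \sum_(i < m) c j0 i *: 'X_(l i).
Proof.
rewrite /LF raddf_sum /= (bigD1 j0) //= [X in _ + X]big1 ?addr0.
  rewrite mderivM mderivXU eqxx mulr1 mderiv_lin.
  by rewrite big1 ?mul0r ?add0r // => i _; rewrite lr_neq mulr0.
move=> j jj; rewrite mderivM mderivXU (inj_eq (@rshift_inj _ _)) (negbTE jj) mulr0 addr0.
by rewrite mderiv_lin big1 ?mul0r // => i _; rewrite lr_neq mulr0.
Qed.

Lemma LF_dd c v : (LF c)^`M(v)^`M(v) = 0.
Proof.
rewrite -(splitK v); case: (split v) => [i|j] /=.
  rewrite LF_dl raddf_sum /= big1 // => j _.
  by rewrite mderiv_mulC mderivXU eq_sym lr_neq mulr0.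
rewrite LF_dr mderiv_lin big1 // => i _; by rewrite lr_neq mulr0.
Qed.

Lemma LF_homog c : LF c \is 2.-homog.
Proof.
have hX u : ('X_u : {mpoly R[m + m]}) \is 1.-homog by rewrite dhomogX; apply/eqP; exact: mdeg1.
apply: (big_ind (fun p : {mpoly R[m+m]} => p \is 2.-homog)).
- exact: dhomog0.
- exact: dhomogD.
move=> j _; apply: (dhomogM (d := 1%N) (e := 1%N)) => //.
apply: (big_ind (fun p : {mpoly R[m+m]} => p \is 1.-homog)).
- exact: dhomog0.
- exact: dhomogD.
by move=> i _; apply: dhomogZ.
Qed.

End S.

Lemma meval_lin (R : realType) N M (c : 'I_M -> R) (f : 'I_M -> 'I_N) (z : 'I_N -> R) :
  (\sum_(i < M) c i *: ('X_(f i) : {mpoly R[N]})).@[z] = \sum_(i < M) c i * z (f i).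
Proof. by rewrite raddf_sum /=; apply eq_bigr => i _; rewrite mevalZ mevalXU. Qed.

Theorem theorem3p3 (R : realType) (m n : nat) (phi : 'I_n -> {mpoly R[m]}) :
  quadratic_map phi -> harmonic_morphism phi ->
  quadratic_map (complete_lift phi) /\ harmonic_morphism (complete_lift phi).
Proof.
move=> hq [_ [lam H]].
pose a k j i := ((phi k)^`M(j))@_U_(i).
have asym k i j : a k j i = a k i j.
  by rewrite /a !mcoeff_mderiv addmC !mnm1E eq_sym.
have dE k j : (phi k)^`M(j) = \sum_(i < m) a k j i *: 'X_i.
  exact: homog1E (deriv_homog2 j (hq k)).
have lift_eq k : complete_lift phi k = LF (a k).
  rewrite /complete_lift /LF; apply eq_bigr => j _; congr (_ * _).
  rewrite {1}dE raddf_sum /=; apply eq_bigr => i _.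
  by rewrite comp_mpolyZ comp_mpolyXU /xvars -tnth_nth tnth_mktuple.
split; first by move=> k; rewrite lift_eq; apply: LF_homog.
split.
  move=> k z; rewrite lift_eq big1 ?meval0 // => v _; exact: LF_dd.
exists (fun z => Num.sqrt (lam (fun j => z (rshift m j)) ^+ 2 + lam (fun i => z (lshift m i)) ^+ 2)).
move=> z k k'.
have e1 k1 i : ((LF (a k1))^`M(lshift m i)).@[z] = ((phi k1)^`M(i)).@[fun j => z (rshift m j)].
  rewrite LF_dl dE meval_lin raddf_sum /=; apply eq_bigr => j _.
  by rewrite mevalM mevalC mevalXU asym.
have e2 k1 j : ((LF (a k1))^`M(rshift m j)).@[z] = ((phi k1)^`M(j)).@[fun i => z (lshift m i)].
  by rewrite LF_dr dE !meval_lin.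
rewrite !lift_eq big_split_ord /=.
under eq_bigr do rewrite !e1.
under [X in _ + X]eq_bigr do rewrite !e2.
rewrite !H sqr_sqrtr ?mulrDl //.
by rewrite addr_ge0 // sqr_ge0.
Qed.
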